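(* Let $k\ge 2$ be an integer and let $P=(p_{ij})$ be the $2^k\times 2^k$ matrix with $p_{ij}=1$ if there is $n\in\{1,\dots,2^k\}$ with $i=\sigma^{-1}_{2^k}(n)$ and $j=\sigma^{-1}_{2^k}(n-1)$ (with the convention $\sigma^{-1}_{2^k}(0)=\sigma^{-1}_{2^k}(2^k)$), and $p_{ij}=0$ otherwise. Then: (i) for every $m=1,\dots,2^{k-2}$, the position $(\sigma^{-1}_{2^k}(4m-3),\sigma^{-1}_{2^k}(4m-4))$ lies in rows $1,\dots,2^{k-2}$ and columns $2^{k-1}+1,\dots,2^{k-1}+2^{k-2}$; (ii) for every $m=1,\dots,2^{k-2}$, the position $(\sigma^{-1}_{2^k}(4m-1),\sigma^{-1}_{2^k}(4m-2))$ lies in rows $2^{k-2}+1,\dots,2^{k-1}$ and columns $2^{k-1}+2^{k-2}+1,\dots,2^{k}$; (iii) for every $m=1,\dots,2^{k-1}$, the position $(\sigma^{-1}_{2^k}(2m),\sigma^{-1}_{2^k}(2m-1))$ lies in rows $2^{k-1}+1,\dots,2^{k}$ and columns $1,\dots,2^{k-1}$. Consequently, partitioning rows into consecutive groups of sizes $2^{k-2},2^{k-2},2^{k-1}$ and columns into consecutive groups of sizes $2^{k-1},2^{k-2},2^{k-2}$, $$P=\begin{pmatrix}0 & B_{2^{k-2}} & 0\\ 0 & 0 & C_{2^{k-2}}\\ C^*_{2^{k-1}} & 0 & 0\end{pmatrix},$$ where the square blocks $B_{2^{k-2}}$, $C_{2^{k-2}}$, $C^*_{2^{k-1}}$ contain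 exactly the $1$-entries of $P$ at the positions listed in (i), (ii), (iii) respectively, and all other entries of $P$ are zero.
   Context: For every integer $k\ge 0$ the map $\sigma^{-1}_{2^k}:\{1,\dots,2^k\}\to\{1,\dots,2^k\}$ is defined recursively by $\sigma^{-1}_{2^0}(1)=1$ and, for $k\ge 1$ and $1\le n\le 2^{k-1}$, $\sigma^{-1}_{2^k}(2n-1)=\sigma^{-1}_{2^{k-1}}(n)$ and $\sigma^{-1}_{2^k}(2n)=2^k+1-\sigma^{-1}_{2^{k-1}}(n)$; it is a permutation of $\{1,\dots,2^k\}$. The matrix $P$ is the permutation matrix of the permutation $\sigma^{-1}_{2^k}(n+1)\mapsto\sigma^{-1}_{2^k}(n)$ (indices mod $2^k$), i.e. of the inverse of the ''disordered permutation'' $\sigma^{-1}_{2^k}(n)\mapsto\sigma^{-1}_{2^k}(n+1)$ describing one step of the dynamics on the superstable $2^k$-periodic orbit of a period-doubling cascade. *)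

(* Defs.v *)
From mathcomp Require Import all_boot all_order all_algebra.
Set Implicit Arguments. Unset Strict Implicit. Unset Printing Implicit Defensive.

(* sigma_inv k n = sigma^{-1}_{2^k}(n), 1-indexed, meaningful for 1 <= n <= 2^k:
   sigma^{-1}_{1}(1) = 1,
   sigma^{-1}_{2^(k+1)}(2m-1) = sigma^{-1}_{2^k}(m),
   sigma^{-1}_{2^(k+1)}(2m)   = 2^(k+1) + 1 - sigma^{-1}_{2^k}(m). *)
Fixpoint sigma_inv (k n : nat) : nat :=
  match k with
  | 0 => 1
  | k'.+1 => if odd n then sigma_inv k' (n.+1)./2
             else (2 ^ k'.+1).+1 - sigma_inv k' n./2
  end.

Definition sigma_inv_c (k n : nat) : nat :=
  sigma_inv k (if n == 0 then 2 ^ k else n).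

(* The 2^k x 2^k matrix P; the entry at ordinals (i, j) is p_{i+1, j+1}:
   p_{ij} = 1 iff there is n in {1..2^k} with i = sigma^{-1}(n), j = sigma^{-1}(n-1). *)
Definition Pmx (k : nat) : 'M[nat]_(2 ^ k) :=
  \matrix_(i < 2 ^ k, j < 2 ^ k)
    (if [exists n : 'I_(2 ^ k),
           (i.+1 == sigma_inv k n.+1) && (j.+1 == sigma_inv_c k n)]
     then 1 else 0).

(* Main.v *)
Require Import Defs.
From mathcomp Require Import all_boot all_order all_algebra zify.

Lemma half2 a : (2 * a)./2 = a.
Proof. by rewrite mul2n doubleK. Qed.

Lemma sig_odd k a : sigma_inv k.+1 (2*a+1) = sigma_inv k (a+1).
Proof.
rewrite /=. have ->: odd (2*a+1) by rewrite oddD oddM.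
by rewrite uphalfE; (have ->: (2*a+1).+1 = 2 * (a+1) by lia); rewrite half2.
Qed.

Lemma sig_even k a : sigma_inv k.+1 (2*a+2) = (2^k.+1).+1 - sigma_inv k (a+1).
Proof.
rewrite /=. have ->: odd (2*a+2) = false by rewrite oddD oddM.
by (have ->: 2*a+2 = 2 * (a+1) by lia); rewrite half2.
Qed.

Lemma sig_range k n : 1 <= n <= 2^k -> 1 <= sigma_inv k n <= 2^k.
Proof.
elim: k n => [|k IH] n Hn; first by [].
rewrite (divn_eq n 2). have := ltn_pmod n (isT : 0 < 2).
set a := n %/ 2; set b := n %% 2.
have E := divn_eq n 2. rewrite -/a -/b in E.
rewrite expnS in Hn *.
case: b E => [|[|b]] E // _.
- have ->: a * 2 + 0 = 2 * (a - 1) + 2 by lia.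
  rewrite sig_even expnS. have := IH (a - 1 + 1). lia.
- have ->: a * 2 + 1 = 2 * a + 1 by lia.
  rewrite sig_odd. have := IH (a + 1). lia.
Qed.

Lemma sig4_1 k m : 1 <= m -> sigma_inv k.+2 (4 * m-3) = sigma_inv k m.
Proof.
move=> Hm. have ->: 4 * m-3 = 2 * (2 * (m-1))+1 by lia.
rewrite sig_odd.
rewrite sig_odd; congr sigma_inv; lia.
Qed.

Lemma sig4_3 k m : 1 <= m -> sigma_inv k.+2 (4 * m-1) = (2^k.+1).+1 - sigma_inv k m.
Proof.
move=> Hm. have ->: 4 * m-1 = 2 * (2 * m-1)+1 by lia.
rewrite sig_odd. have ->: 2 * m-1+1 = 2 * (m-1)+2 by lia.
rewrite sig_even; congr (_ - sigma_inv _ _); lia.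
Qed.

Lemma sig4_2 k m : 1 <= m -> sigma_inv k.+2 (4 * m-2) = (2^k.+2).+1 - sigma_inv k m.
Proof.
move=> Hm. have ->: 4 * m-2 = 2 * (2 * (m-1))+2 by lia.
rewrite sig_even.
rewrite sig_odd; congr (_ - sigma_inv _ _); lia.
Qed.

Lemma sig4_0 k m : 1 <= m -> sigma_inv k.+2 (4 * m) = (2^k.+2).+1 - ((2^k.+1).+1 - sigma_inv k m).
Proof.
move=> Hm. have ->: 4 * m = 2 * (2 * m-1)+2 by lia.
rewrite sig_even. have ->: 2 * m-1+1 = 2 * (m-1)+2 by lia.
rewrite sig_even; congr (_ - (_ - sigma_inv _ _)); lia.
Qed.

Lemma sig2_0 k m : 1 <= m -> sigma_inv k.+1 (2 * m) = (2^k.+1).+1 - sigma_inv k m.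
Proof.
move=> Hm. have ->: 2 * m = 2 * (m-1)+2 by lia.
rewrite sig_even; congr (_ - sigma_inv _ _); lia.
Qed.

Lemma sig2_1 k m : 1 <= m -> sigma_inv k.+1 (2 * m-1) = sigma_inv k m.
Proof.
move=> Hm. have ->: 2 * m-1 = 2 * (m-1)+1 by lia.
rewrite sig_odd; congr sigma_inv; lia.
Qed.

Lemma PmxE k (i j : 'I_(2^k)) : Pmx k i j = 1 <->
  exists n, n < 2^k /\ i.+1 = sigma_inv k n.+1 /\ j.+1 = sigma_inv_c k n.
Proof.
rewrite mxE; split.
  by case: existsP => // [[n /andP[/eqP a /eqP b]]] _; exists n.
move=> [n [Hn [a b]]]; case: existsP => // H; exfalso; apply: H.
by exists (Ordinal Hn); rewrite /= a b !eqxx.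
Qed.

Lemma Pmx0 k (i j : 'I_(2^k)) : Pmx k i j <> 1 -> Pmx k i j = 0.
Proof. by rewrite mxE; case: ifP. Qed.

Lemma cls q n : n < 4 * q ->
  [\/ exists2 m, 1 <= m <= q & n = 4 * m - 4,
      exists2 m, 1 <= m <= q & n = 4 * m - 2 |
      exists2 m, 1 <= m <= 2 * q & n = 2 * m - 1].
Proof.
move=> Hn. have E := divn_eq n 4. have := ltn_pmod n (isT : 0 < 4).
set a := n %/ 4 in E *; set b := n %% 4 in E *.
case: b E => [|[|[|[|b]]]] E // _.
- by apply: Or31; exists (a+1); lia.
- by apply: Or33; exists (2*a+1); lia.
- by apply: Or32; exists (a+1); lia.
- by apply: Or33; exists (2*a+2); lia.
Qed.

Lemma sic k n : n != 0 -> sigma_inv_c k n = sigma_inv k n.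
Proof. by rewrite /sigma_inv_c => /negPf ->. Qed.
Theorem lemma3 (k : nat) (hk : 2 <= k) :
  let q := 2 ^ (k - 2) in
  let h := 2 ^ (k - 1) in
  (* (i) *)
  (forall m, 1 <= m <= q ->
     (1 <= sigma_inv k (4 * m - 3) <= q) /\
     (h + 1 <= sigma_inv_c k (4 * m - 4) <= h + q)) /\
  (* (ii) *)
  (forall m, 1 <= m <= q ->
     (q + 1 <= sigma_inv k (4 * m - 1) <= h) /\
     (h + q + 1 <= sigma_inv k (4 * m - 2) <= 2 ^ k)) /\
  (* (iii) *)
  (forall m, 1 <= m <= h ->
     (h + 1 <= sigma_inv k (2 * m) <= 2 ^ k) /\
     (1 <= sigma_inv k (2 * m - 1) <= h)) /\
  (* block structure *)
  (forall i j : 'I_(2 ^ k),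
     let r := i.+1 in let c := j.+1 in
     (* block B (rows 1..q, columns h+1..h+q) *)
     ((1 <= r <= q) && (h + 1 <= c <= h + q) ->
        (Pmx k i j = 1 <-> exists2 m, 1 <= m <= q &
           r = sigma_inv k (4 * m - 3) /\ c = sigma_inv_c k (4 * m - 4))) /\
     (* block C (rows q+1..h, columns h+q+1..2^k) *)
     ((q + 1 <= r <= h) && (h + q + 1 <= c <= 2 ^ k) ->
        (Pmx k i j = 1 <-> exists2 m, 1 <= m <= q &
           r = sigma_inv k (4 * m - 1) /\ c = sigma_inv k (4 * m - 2))) /\
     (* block C* (rows h+1..2^k, columns 1..h) *)
     ((h + 1 <= r <= 2 ^ k) && (1 <= c <= h) ->
        (Pmx k i j = 1 <-> exists2 m, 1 <= m <= h &
           r = sigma_inv k (2 * m) /\ c = sigma_inv k (2 * m - 1))) /\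
     (* all entries outside the three blocks vanish *)
     (~~ ((1 <= r <= q) && (h + 1 <= c <= h + q)) ->
      ~~ ((q + 1 <= r <= h) && (h + q + 1 <= c <= 2 ^ k)) ->
      ~~ ((h + 1 <= r <= 2 ^ k) && (1 <= c <= h)) ->
        Pmx k i j = 0)).
Proof.
move=> q h; rewrite {}/q {}/h.
case: k hk => [|[|k]] // _.
have -> : k.+2 - 2 = k by lia. have -> : k.+2 - 1 = k.+1 by lia.
have E1 : 2^k.+1 = 2 * 2^k by rewrite expnS.
have E2 : 2^k.+2 = 4 * 2^k by rewrite !expnS mulnA.
have Q0 : 0 < 2^k by rewrite expn_gt0.
have R := sig_range k.
have H1 : forall m, 1 <= m <= 2^k ->
   (1 <= sigma_inv k.+2 (4 * m - 3) <= 2^k) /\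
   (2^k.+1 + 1 <= sigma_inv_c k.+2 (4 * m - 4) <= 2^k.+1 + 2^k).
  move=> m Hm; rewrite sig4_1; last lia.
  split; first by have := R m; lia.
  rewrite /sigma_inv_c; case: eqP => H0.
    rewrite E2 sig4_0; last lia. have := R (2^k). rewrite E1 E2; lia.
  have -> : 4 * m - 4 = 4 * (m-1) by lia.
  rewrite sig4_0; last lia. have := R (m-1). rewrite E1 E2; lia.
have H2 : forall m, 1 <= m <= 2^k ->
   (2^k + 1 <= sigma_inv k.+2 (4 * m - 1) <= 2^k.+1) /\
   (2^k.+1 + 2^k + 1 <= sigma_inv k.+2 (4 * m - 2) <= 2^k.+2).
  move=> m Hm; rewrite sig4_3 ?sig4_2; try lia.
  have := R m. rewrite E1 E2; lia.
have H3 : forall m, 1 <= m <= 2^k.+1 ->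
   (2^k.+1 + 1 <= sigma_inv k.+2 (2 * m) <= 2^k.+2) /\
   (1 <= sigma_inv k.+2 (2 * m - 1) <= 2^k.+1).
  move=> m Hm; rewrite sig2_0 ?sig2_1; try lia.
  have := sig_range k.+1 m. rewrite E1 E2 in Hm *; lia.
split => //; split => //; split => //.
move=> i j.
have Hi := ltn_ord i; have Hj := ltn_ord j.
have Hn : forall n, n < 2^k.+2 ->
  i.+1 = sigma_inv k.+2 n.+1 -> j.+1 = sigma_inv_c k.+2 n ->
  [\/ exists2 m, 1 <= m <= 2^k & i.+1 = sigma_inv k.+2 (4 * m - 3) /\ j.+1 = sigma_inv_c k.+2 (4 * m - 4),
      exists2 m, 1 <= m <= 2^k & i.+1 = sigma_inv k.+2 (4 * m - 1) /\ j.+1 = sigma_inv k.+2 (4 * m - 2) |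
      exists2 m, 1 <= m <= 2^k.+1 & i.+1 = sigma_inv k.+2 (2 * m) /\ j.+1 = sigma_inv k.+2 (2 * m - 1)].
  move=> n Hn0; have := cls (2^k) n; rewrite -E2 => /(_ Hn0) [] [m Hm ->] a b.
  - apply: Or31; exists m => //; split => //; rewrite a; congr sigma_inv; lia.
  - apply: Or32; exists m => //; split; first by rewrite a; congr sigma_inv; lia.
    by rewrite b sic //; lia.
  - apply: Or33; exists m; first by rewrite E1.
    split; first by rewrite a; congr sigma_inv; lia.
    by rewrite b sic //; lia.
split; [|split; [|split]].
- move=> Hb; rewrite PmxE; split.
    move=> [n [Hn' [a b]]]; case: (Hn n Hn' a b) => -[m Hm [a' b']].
    - by exists m.
    - by have := H2 m Hm; lia.
    - by have := H3 m Hm; lia.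
  move=> [m Hm [a b]]; exists (4 * m - 4); split; first by rewrite E2; lia.
  by rewrite b; split=> //; rewrite a; congr sigma_inv; lia.
- move=> Hb; rewrite PmxE; split.
    move=> [n [Hn' [a b]]]; case: (Hn n Hn' a b) => -[m Hm [a' b']].
    - by have := H1 m Hm; lia.
    - by exists m.
    - by have := H3 m Hm; lia.
  move=> [m Hm [a b]]; exists (4 * m - 2); split; first by rewrite E2; lia.
  split; first by rewrite a; congr sigma_inv; lia.
  by rewrite b sic //; lia.
- move=> Hb; rewrite PmxE; split.
    move=> [n [Hn' [a b]]]; case: (Hn n Hn' a b) => -[m Hm [a' b']].
    - by have := H1 m Hm; lia.
    - by have := H2 m Hm; lia.
    - by exists m.
  move=> [m Hm [a b]]; exists (2 * m - 1); split; first by rewrite E2 E1 in Hm *; lia.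
  split; first by rewrite a; congr sigma_inv; lia.
  by rewrite b sic //; lia.
- move=> Nb Nc Nd; apply: Pmx0; rewrite PmxE => -[n [Hn' [a b]]].
  case: (Hn n Hn' a b) => -[m Hm [a' b']].
  + by have := H1 m Hm; lia.
  + by have := H2 m Hm; lia.
  + by have := H3 m Hm; lia.
Qed.
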